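(* Assume Martin's Axiom and the negation of the Continuum Hypothesis. Let $(\omega_\alpha)_{\alpha<\omega_1}$ be a family of non-decreasing maps $[0,\infty)\to[0,\infty)$ with $\omega_\alpha(0)=0$ for every $\alpha$. Then there exist an uncountable set $C\subset\omega_1$ and a (finite-valued) function $\omega:[0,\infty)\to[0,\infty)$ such that $\omega\ge\omega_\alpha$ for all $\alpha\in C$. *)

(* Defs.v *)
From Stdlib Require Import Reals.
Open Scope R_scope.

Definition countable_type (A : Type) : Prop :=
  exists f : A -> nat, forall x y, f x = f y -> x = y.

Definition countable_set {A : Type} (S : A -> Prop) : Prop :=
  exists f : A -> nat, forall x y, S x -> S y -> f x = f y -> x = y.

(** The continuum is modelled by Cantor space [nat -> bool] (2^aleph_0). *)
Definition card_lt_continuum (J : Type) : Prop :=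
  (exists f : J -> (nat -> bool), forall x y, f x = f y -> x = y) /\
  ~ (exists g : (nat -> bool) -> J, forall x y, g x = g y -> x = y).

Definition is_omega1 (I : Type) (lt : I -> I -> Prop) : Prop :=
  (forall x, ~ lt x x) /\
  (forall x y z, lt x y -> lt y z -> lt x z) /\
  (forall x y, lt x y \/ x = y \/ lt y x) /\
  well_founded lt /\
  (forall a, countable_set (fun x => lt x a)) /\
  ~ countable_type I.

Definition is_poset {P : Type} (le : P -> P -> Prop) : Prop :=
  (forall p, le p p) /\
  (forall p q, le p q -> le q p -> p = q) /\
  (forall p q r, le p q -> le q r -> le p r).

Definition compatible {P : Type} (le : P -> P -> Prop) (p q : P) : Prop :=
  exists r, le r p /\ le r q.

Definition antichain {P : Type} (le : P -> P -> Prop) (A : P -> Prop) : Prop :=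
  forall p q, A p -> A q -> p <> q -> ~ compatible le p q.

Definition ccc {P : Type} (le : P -> P -> Prop) : Prop :=
  forall A, antichain le A -> countable_set A.

Definition dense {P : Type} (le : P -> P -> Prop) (D : P -> Prop) : Prop :=
  forall p, exists q, D q /\ le q p.

Definition is_filter {P : Type} (le : P -> P -> Prop) (G : P -> Prop) : Prop :=
  (exists p, G p) /\
  (forall p q, G p -> le p q -> G q) /\
  (forall p q, G p -> G q -> exists r, G r /\ le r p /\ le r q).

Definition MartinsAxiom : Prop :=
  forall (P : Type) (le : P -> P -> Prop),
    inhabited P -> is_poset le -> ccc le ->
    forall (J : Type) (D : J -> P -> Prop),
      card_lt_continuum J ->
      (forall j, dense le (D j)) ->
      exists G, is_filter le G /\ forall j, exists p, G p /\ D j p.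

(** Negation of CH: aleph_1 < 2^aleph_0 (with omega_1 given by [I]). *)
Definition not_CH (I : Type) : Prop := card_lt_continuum I.

(* Main.v *)
Require Import Defs.
From Stdlib Require Import Reals Lra Lia List Classical ClassicalEpsilon FunctionalExtensionality Cantor.
Import ListNotations.
Open Scope R_scope.

Fixpoint lcode (l : list nat) : nat :=
  match l with [] => 0%nat | x :: l' => S (Cantor.to_nat (x, lcode l')) end.

Lemma to_nat_inj p q : Cantor.to_nat p = Cantor.to_nat q -> p = q.
Proof. intro E. rewrite <- (cancel_of_to p), <- (cancel_of_to q), E. reflexivity. Qed.

Lemma lcode_inj l l' : lcode l = lcode l' -> l = l'.
Proof.
  revert l'; induction l as [|x l IH]; intros [|y l'] E; try discriminate; auto.
  assert (E' : Cantor.to_nat (x, lcode l) = Cantor.to_nat (y, lcode l')).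
  { change (S (Cantor.to_nat (x, lcode l)) = S (Cantor.to_nat (y, lcode l'))) in E. lia. }
  apply to_nat_inj in E'. clear E. rename E' into E. injection E as E1 E2. subst. f_equal. auto.
Qed.

Lemma pigeon {I : Type} (k : I -> nat) : ~ countable_type I ->
  exists m, ~ countable_set (fun a => k a = m).
Proof.
  intros HI. apply NNPP; intro H. apply HI.
  assert (H' : forall m, countable_set (fun a => k a = m)).
  { intro m. apply NNPP; intro Hn. apply H; eauto. }
  pose (phi := fun m => proj1_sig (constructive_indefinite_description _ (H' m))).
  assert (Hphi : forall m x y, k x = m -> k y = m -> phi m x = phi m y -> x = y).
  { intro m. exact (proj2_sig (constructive_indefinite_description _ (H' m))). }
  clearbody phi.
  exists (fun a => Cantor.to_nat (k a, phi (k a) a)).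
  intros x y E. apply to_nat_inj in E. injection E as E1 E2.
  rewrite <- E1 in E2. apply (Hphi (k x)); auto.
Qed.

Fixpoint build {I : Type} (pk : list I -> I) (n : nat) : list I :=
  match n with 0 => [] | S n => pk (build pk n) :: build pk n end.

Lemma build_in {I : Type} (pk : list I -> I) n m : (n < m)%nat -> In (pk (build pk n)) (build pk m).
Proof.
  induction m; intro H; [lia|]. simpl.
  destruct (Nat.eq_dec n m); [subst; left; auto | right; apply IHm; lia].
Qed.

Lemma inf_seq {I : Type} : ~ countable_type I -> exists a : nat -> I, forall n m, a n = a m -> n = m.
Proof.
  intro HI.
  assert (fresh : forall l : list I, exists x, ~ In x l).
  { intro l. apply NNPP; intro H. apply HI.
    assert (Hall : forall x, exists n, nth_error l n = Some x).
    { intro x. apply In_nth_error. apply NNPP; intro; apply H; eauto. }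
    exists (fun x => proj1_sig (constructive_indefinite_description _ (Hall x))).
    intros x y E.
    pose proof (proj2_sig (constructive_indefinite_description _ (Hall x))) as Ex.
    pose proof (proj2_sig (constructive_indefinite_description _ (Hall y))) as Ey.
    simpl in *. rewrite E in Ex. rewrite Ex in Ey. congruence. }
  pose (pk := fun l => proj1_sig (constructive_indefinite_description _ (fresh l))).
  assert (Hpk : forall l, ~ In (pk l) l).
  { intro l. exact (proj2_sig (constructive_indefinite_description _ (fresh l))). }
  clearbody pk.
  exists (fun n => pk (build pk n)). intros n m E.
  destruct (Nat.lt_total n m) as [H|[H|H]]; auto; exfalso.
  - apply (Hpk (build pk m)). rewrite <- E. apply build_in; auto.
  - apply (Hpk (build pk n)). rewrite E. apply build_in; auto.
Qed.

Definition PP := (list nat * (nat -> nat))%type.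
Definition leP (r p : PP) : Prop :=
  (exists t, fst r = fst p ++ t) /\ (forall n, (snd p n <= snd r n)%nat) /\
  (forall n, (length (fst p) <= n < length (fst r))%nat -> (snd p n <= nth n (fst r) 0)%nat).

Lemma leP_poset : is_poset leP.
Proof.
  split; [|split].
  - intros [s f]; unfold leP; simpl. split; [exists []; rewrite app_nil_r; auto|].
    split; intros; lia.
  - intros [s f] [s' g] [[t1 E1] [H1 _]] [[t2 E2] [H2 _]]; simpl in *.
    assert (length t1 = 0%nat).
    { apply (f_equal (@length nat)) in E1, E2. rewrite length_app in *. lia. }
    destruct t1; [|simpl in *; lia]. rewrite app_nil_r in E1. subst. f_equal.
    apply functional_extensionality; intro n. specialize (H1 n); specialize (H2 n); lia.
  - intros [u m] [v k] [s f] [[t1 E1] [H1 H1']] [[t2 E2] [H2 H2']]; simpl in *.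
    split; [exists (t2 ++ t1); rewrite E1, E2, app_assoc; auto|].
    split; [intro n; specialize (H1 n); specialize (H2 n); simpl; lia|].
    simpl; intros n Hn.
    destruct (Nat.lt_ge_cases n (length v)).
    + rewrite E1, app_nth1 by lia. apply H2'. lia.
    + specialize (H1' n ltac:(lia)). specialize (H2 n). lia.
Qed.

Lemma leP_ccc : ccc leP.
Proof.
  intros A HA. exists (fun p => lcode (fst p)). intros p q Hp Hq E.
  apply lcode_inj in E. apply NNPP; intro Hne. apply (HA p q Hp Hq Hne).
  destruct p as [s f], q as [s' g]; simpl in E; subst s'.
  exists (s, fun n => Nat.max (f n) (g n)). unfold leP; simpl.
  split; (split; [exists []; rewrite app_nil_r; auto|split; intros; lia]).
Qed.

Lemma nth_map_seq (g : nat -> nat) k len n : (n < len)%nat ->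
  nth n (map g (seq k len)) 0%nat = g (k + n)%nat.
Proof.
  intros. rewrite nth_indep with (d' := g 0%nat) by (rewrite length_map, length_seq; lia).
  rewrite map_nth, seq_nth by lia. reflexivity.
Qed.

Lemma dense_ext (fa : nat -> nat) (N : nat) :
  dense leP (fun p => (forall n, (fa n <= snd p n)%nat) /\ (N <= length (fst p))%nat).
Proof.
  intros [s g]. exists (s ++ map g (seq (length s) N), fun n => Nat.max (g n) (fa n)).
  unfold leP; simpl. split.
  - split; [intro; lia|rewrite length_app, length_map, length_seq; lia].
  - split; [exists (map g (seq (length s) N)); reflexivity|].
    split; [intro; lia|]. intros n Hn.
    rewrite length_app, length_map, length_seq in Hn.
    rewrite app_nth2 by lia. rewrite nth_map_seq by lia.
    replace (length s + (n - length s))%nat with n by lia. lia.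
Qed.

Theorem proposition3p7
  (HMA : MartinsAxiom)
  (I : Type) (ltI : I -> I -> Prop) (HI : is_omega1 I ltI) (HnCH : not_CH I)
  (om : I -> R -> R)
  (Hnn : forall a t, 0 <= t -> 0 <= om a t)
  (Hmono : forall a s t, 0 <= s -> s <= t -> om a s <= om a t)
  (H0 : forall a, om a 0 = 0) :
  exists (C : I -> Prop) (w : R -> R),
    ~ countable_set C /\
    (forall t, 0 <= t -> 0 <= w t) /\
    (forall a, C a -> forall t, 0 <= t -> om a t <= w t).
Proof.
  destruct HI as (_ & _ & _ & _ & _ & HIu).
  destruct (inf_seq HIu) as [a Ha].
  pose (h := fun x => match excluded_middle_informative (exists k, a k = x) with
                      | left H => proj1_sig (constructive_indefinite_description _ H)
                      | right _ => 0%nat end).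
  assert (Hh : forall n, h (a n) = n).
  { intro n; unfold h; destruct (excluded_middle_informative _) as [H|H].
    - destruct (constructive_indefinite_description _ H) as [k Hk]; simpl; apply Ha; auto.
    - exfalso; eauto. }
  clearbody h.
  assert (Hub : forall x : R, exists m : nat, x <= INR m).
  { intro x. destruct (INR_unbounded x) as [m Hm]. exists m; lra. }
  pose (f := fun (al : I) (n : nat) =>
               proj1_sig (constructive_indefinite_description _ (Hub (om al (INR n))))).
  assert (Hf : forall al n, om al (INR n) <= INR (f al n)).
  { intros al n. exact (proj2_sig (constructive_indefinite_description _ (Hub (om al (INR n))))). }
  clearbody f.
  destruct (HMA PP leP (inhabits ([], fun _ => 0%nat)) leP_poset leP_ccc I
              (fun al p => (forall n, (f al n <= snd p n)%nat) /\ (h al <= length (fst p))%nat)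
              HnCH (fun al => dense_ext (f al) (h al))) as [G [HG HGD]].
  pose (pa := fun al => proj1_sig (constructive_indefinite_description _ (HGD al))).
  assert (Hpa : forall al, G (pa al) /\ (forall n, (f al n <= snd (pa al) n)%nat)
                            /\ (h al <= length (fst (pa al)))%nat).
  { intro al. exact (proj2_sig (constructive_indefinite_description _ (HGD al))). }
  clearbody pa.
  pose (key := fun al => Cantor.to_nat (lcode (fst (pa al)),
                  lcode (map (f al) (seq 0 (length (fst (pa al))))))).
  destruct (pigeon key HIu) as [m Hm].
  assert (Hne : exists al0, key al0 = m).
  { apply NNPP; intro Hn; apply Hm; exists (fun _ => 0%nat); intros x y Hx; exfalso; eauto. }
  destruct Hne as [al0 Hal0].
  assert (HT : forall n, exists q, G q /\ (n < length (fst q))%nat).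
  { intro n. exists (pa (a (S n))). destruct (Hpa (a (S n))) as [HG1 [_ Hl]].
    rewrite Hh in Hl. split; auto; lia. }
  pose (Q := fun n => proj1_sig (constructive_indefinite_description _ (HT n))).
  assert (HQ : forall n, G (Q n) /\ (n < length (fst (Q n)))%nat).
  { intro n. exact (proj2_sig (constructive_indefinite_description _ (HT n))). }
  clearbody Q.
  pose (W := fun n => Nat.max (nth n (map (f al0) (seq 0 (length (fst (pa al0))))) 0%nat)
                              (nth n (fst (Q n)) 0%nat)).
  assert (HW : forall al, key al = m -> forall n, (f al n <= W n)%nat).
  { intros al Hal n.
    assert (E : key al = key al0) by congruence. unfold key in E.
    apply to_nat_inj in E. injection E as Es EL.
    apply lcode_inj in Es. apply lcode_inj in EL.
    destruct (Nat.lt_ge_cases n (length (fst (pa al)))) as [Hlt|Hge].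
    - unfold W. rewrite <- EL. rewrite nth_map_seq by exact Hlt. simpl. lia.
    - destruct (Hpa al) as [Gp [Hfp _]]. destruct (HQ n) as [Gq Hq].
      destruct HG as (_ & _ & Hdir).
      destruct (Hdir _ _ Gp Gq) as [r [Gr [[[t1 E1] [_ Hn1]] [[t2 E2] _]]]].
      assert (Hlr : length (fst r) = (length (fst (Q n)) + length t2)%nat)
        by (rewrite E2, length_app; auto).
      specialize (Hn1 n ltac:(lia)). specialize (Hfp n).
      rewrite E2, app_nth1 in Hn1 by lia.
      unfold W. lia. }
  pose (nt := fun t : R => proj1_sig (constructive_indefinite_description _ (Hub t))).
  assert (Hnt : forall t, t <= INR (nt t)).
  { intro t. exact (proj2_sig (constructive_indefinite_description _ (Hub t))). }
  clearbody nt.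
  exists (fun al => key al = m), (fun t => INR (W (nt t))).
  split; [exact Hm|split].
  - intros; apply pos_INR.
  - intros al Hal t Ht.
    eapply Rle_trans. apply (Hmono al t (INR (nt t))); auto.
    eapply Rle_trans; [apply Hf|]. apply le_INR. apply HW; auto.
Qed.
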